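(* In the two-period difference-in-differences setting with anticipation described in the context, suppose: (i) $\{Y_{i0}(0,1),Y_{i0}(1,1),Y_{i0}(0),Y_{i1}(0),Y_{i1}(1),D_i,A_i\}_{i=1}^n$ are i.i.d. across $i$; (ii) $Y_{i0}(0)=Y_{i0}(0,1)$; (iii) $\mathbb{E}[g(Y_{i1}(0))-g(Y_{i0}(0))\mid D_i=1]=\mathbb{E}[g(Y_{i1}(0))-g(Y_{i0}(0))\mid D_i=0]$; (iv) $\mathbb{E}[g(Y_{i0}(0,0))\mid D_i=1,A_i=0]=\mathbb{E}[g(Y_{i0}(0,0))\mid D_i=1,A_i=1]$; (v) $g(Y_{i0})\in[a,b]$. Then $\mu_g$ is partially identified in the closed interval $[\mu_{g,l},\mu_{g,u}]$, where \[\mu_{g,l}=\mathbb{E}\left[\frac{D_i-\mathbb{P}[D_i=1]}{\mathbb{P}[D_i=1](1-\mathbb{P}[D_i=1])}g(Y_{i1})+\frac{1-D_i}{1-\mathbb{P}[D_i=1]}g(Y_{i0})-b\right],\] \[\mu_{g,u}=\mathbb{E}\left[\frac{D_i-\mathbb{P}[D_i=1]}{\mathbb{P}[D_i=1](1-\mathbb{P}[D_i=1])}g(Y_{i1})+\frac{1-D_i}{1-\mathbb{P}[D_i=1]}g(Y_{i0})-a\right].\]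
   Context: Two periods $t\in\{0,1\}$, units $i=1,\dots,n$, observed binary treatment $D_i$ (applied in period 1) with $0<\mathbb{P}[D_i=1]<1$, unobserved binary anticipation status $A_i$ in period 0. Potential outcomes $Y_{i1}(d)$, $d\in\{0,1\}$; $Y_{i0}(0)$ (also written $Y_{i0}(0,0)$) the period-0 outcome without anticipation or treatment; $Y_{i0}(a,1)$ the period-0 outcome of a unit to be treated with anticipation status $a$. Observed: $Y_{i1}=D_iY_{i1}(1)+(1-D_i)Y_{i1}(0)$, $Y_{i0}=(1-D_i)Y_{i0}(0)+D_i[(1-A_i)Y_{i0}(0,1)+A_iY_{i0}(1,1)]$. $g$ is a known measurable real function with finite expectations; $a\le b$ are real constants. $\mu_g=\mathbb{E}[g(Y_{i1}(1))-g(Y_{i1}(0))\mid D_i=1]$. *)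

(* Defs.v *)
From HB Require Import structures.
From mathcomp Require Import all_boot all_order all_algebra.
From mathcomp Require Import all_classical all_reals all_analysis.
Set Implicit Arguments. Unset Strict Implicit. Unset Printing Implicit Defensive.
Import Order.TTheory GRing.Theory Num.Theory.
Local Open Scope classical_set_scope.
Local Open Scope ring_scope.

Definition Ex {d} {T : measurableType d} {R : realType} (P : probability T R)
  (X : T -> R) : R := fine (\int[P]_x (X x)%:E).

Definition prob {d} {T : measurableType d} {R : realType} (P : probability T R)
  (B : set T) : R := fine (P B).

Definition condE {d} {T : measurableType d} {R : realType} (P : probability T R)
  (X : T -> R) (B : set T) : R := Ex P (fun x => X x * \1_B x) / prob P B.

(* Main.v *)
Require Import Defs.
From HB Require Import structures.
From mathcomp Require Import all_boot all_order all_algebra.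
From mathcomp Require Import all_classical all_reals all_analysis.
From mathcomp Require Import measurable_realfun.
From mathcomp Require Import ring lra.
Import Order.TTheory GRing.Theory Num.Theory.
Local Open Scope classical_set_scope.
Local Open Scope ring_scope.
Section H.
Context d (T : measurableType d) (R : realType) (P : probability T R).
Notation Int f := (P.-integrable setT (EFin \o f)).

Lemma ExR f : Ex P f = Rintegral P setT f. Proof. by []. Qed.

Lemma ExD f g : Int f -> Int g -> Ex P (fun x => f x + g x) = Ex P f + Ex P g.
Proof. by move=> hf hg; rewrite !ExR RintegralD. Qed.

Lemma ExB f g : Int f -> Int g -> Ex P (fun x => f x - g x) = Ex P f - Ex P g.
Proof. by move=> hf hg; rewrite !ExR RintegralB. Qed.

Lemma ExZ k f : Int f -> Ex P (fun x => k * f x) = k * Ex P f.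
Proof. by move=> hf; rewrite !ExR RintegralZl. Qed.

Lemma Ex_cst k : Ex P (fun _ => k) = k.
Proof. rewrite ExR Rintegral_cst //. have -> : fine (P setT) = 1 by rewrite probability_setT. by rewrite mulr1. Qed.

Lemma Ex_le f g : Int f -> Int g -> (forall x, f x <= g x) -> Ex P f <= Ex P g.
Proof. by move=> hf hg fg; rewrite !ExR; apply: le_Rintegral. Qed.

Lemma Ex_ext f g : (forall x, f x = g x) -> Ex P f = Ex P g.
Proof. by move=> fg; congr Ex; apply: funext. Qed.

Lemma Ex_indic B : measurable B -> Ex P (\1_B) = prob P B.
Proof. by move=> mB; rewrite /Ex integral_indic // setIT. Qed.

Lemma Int_cst k : Int (fun _ => k).
Proof. exact: finite_measure_integrable_cst. Qed.

Lemma Int_indic B : measurable B -> Int (\1_B).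
Proof. by move=> mB; apply: integrable_indic. Qed.

Lemma IntD f g : Int f -> Int g -> Int (fun x => f x + g x).
Proof.
move=> hf hg; have := integrableD measurableT hf hg.
by congr (_.-integrable _ _); apply: funext => x.
Qed.

Lemma IntB f g : Int f -> Int g -> Int (fun x => f x - g x).
Proof.
move=> hf hg; have := integrableB measurableT hf hg.
by congr (_.-integrable _ _); apply: funext => x.
Qed.

Lemma IntZ k f : Int f -> Int (fun x => k * f x).
Proof.
move=> hf; have := integrableZl measurableT k hf.
by congr (_.-integrable _ _); apply: funext => x.
Qed.

Lemma IntMI f B : measurable B -> Int f -> Int (fun x => f x * \1_B x).
Proof.
move=> mB hf; have := @integrableMl _ _ _ P setT measurableT _ (\1_B) hf.
have mi : measurable_fun setT (\1_B : T -> R) by apply/measurable_indicP.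
have bd : [bounded (\1_B : T -> R) x | x in setT].
  exists 1; split => // M M1 x _ /=; rewrite indicE.
  case: (_ \in _); rewrite ?normr1 ?normr0; apply: ltW => //.
  exact: lt_trans M1.
move=> /(_ mi bd).
by congr (_.-integrable _ _); apply: funext => x.
Qed.

Lemma Ex_null f B : measurable B -> Int f -> prob P B = 0 ->
  Ex P (fun x => f x * \1_B x) = 0.
Proof.
move=> mB hf pB.
have PB : P B = 0%E.
  by rewrite -[P B]fineK ?fin_num_measure // -/(prob P B) pB.
transitivity (Rintegral P B f).
  rewrite Rintegral_mkcond ExR; apply: eq_Rintegral => x _.
  by rewrite /patch indicE; case: (_ \in _); rewrite ?mulr1 ?mulr0.
rewrite /Rintegral null_set_integral //.
apply: measurable_funS (measurable_int _ hf) => //.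
Qed.

End H.

Lemma alg1 (R : realFieldType) (p u v w z c : R) : p != 0 -> 1 - p != 0 ->
  (1 - p) / (p * (1 - p)) * u + (1 - 1) / (1 - p) * v - c =
  p^-1 * (u * 1) - ((1 - p)^-1 * (w * 0) - (1 - p)^-1 * (z * 0)) - c.
Proof. by move=> h1 h2; field; rewrite h1 h2. Qed.

Lemma alg2 (R : realFieldType) (p u v w z c : R) : p != 0 -> 1 - p != 0 ->
  (0 - p) / (p * (1 - p)) * w + (1 - 0) / (1 - p) * z - c =
  p^-1 * (u * 0) - ((1 - p)^-1 * (w * 1) - (1 - p)^-1 * (z * 1)) - c.
Proof. by move=> h1 h2; field; rewrite h1 h2. Qed.

Lemma alg3 (R : realFieldType) (e1 e10 c p : R) : p != 0 ->
  e1 / p - (e10 - c * p) / p = (e1 - e10) / p + c.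
Proof. by move=> h1; field. Qed.

Theorem theoremA3 (d : measure_display) (T : measurableType d) (R : realType)
  (P : probability T R) (Dset Aset : set T)
  (Y00 Y001 Y011 Y10 Y11 : T -> R) (g : R -> R) (a b : R) :
  measurable Dset -> measurable Aset ->
  0 < prob P Dset < 1 ->
  measurable_fun setT Y00 -> measurable_fun setT Y001 ->
  measurable_fun setT Y011 -> measurable_fun setT Y10 ->
  measurable_fun setT Y11 -> measurable_fun setT g ->
  P.-integrable setT (fun x => (g (Y00 x))%:E) ->
  P.-integrable setT (fun x => (g (Y001 x))%:E) ->
  P.-integrable setT (fun x => (g (Y011 x))%:E) ->
  P.-integrable setT (fun x => (g (Y10 x))%:E) ->
  P.-integrable setT (fun x => (g (Y11 x))%:E) ->
  a <= b ->
  let Dv := \1_Dset : T -> R in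
  let Av := \1_Aset : T -> R in
  let Y1 := fun x => Dv x * Y11 x + (1 - Dv x) * Y10 x in
  let Y0 := fun x => (1 - Dv x) * Y00 x
              + Dv x * ((1 - Av x) * Y001 x + Av x * Y011 x) in
  let p := prob P Dset in
  (* (ii) *)
  (forall x, Y00 x = Y001 x) ->
  (* (iii) parallel trends *)
  condE P (fun x => g (Y10 x) - g (Y00 x)) Dset
    = condE P (fun x => g (Y10 x) - g (Y00 x)) (~` Dset) ->
  (* (iv) the conditioning events are non-null where (iv) is meaningful *)
  0 < prob P (Dset `&` ~` Aset) ->
  (0 < prob P (Dset `&` Aset) ->
   condE P (fun x => g (Y00 x)) (Dset `&` ~` Aset)
     = condE P (fun x => g (Y00 x)) (Dset `&` Aset)) ->
  (* (v) *)
  (forall x, a <= g (Y0 x) <= b) ->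
  let mu_g := condE P (fun x => g (Y11 x) - g (Y10 x)) Dset in
  let mu_l := Ex P (fun x => (Dv x - p) / (p * (1 - p)) * g (Y1 x)
                             + (1 - Dv x) / (1 - p) * g (Y0 x) - b) in
  let mu_u := Ex P (fun x => (Dv x - p) / (p * (1 - p)) * g (Y1 x)
                             + (1 - Dv x) / (1 - p) * g (Y0 x) - a) in
  mu_l <= mu_g <= mu_u.
Proof.
move=> mD mA /andP[p0 p1] _ _ _ _ _ _ i00 i001 i011 i10 i11 ab Dv Av Y1 Y0 p.
move=> Y0001 iii q1pos iv bnd; cbv zeta.
have mDc : measurable (~` Dset) by apply: measurableC.
have mDA' : measurable (Dset `&` ~` Aset) by apply: measurableI => //; apply: measurableC.
have mDA : measurable (Dset `&` Aset) by apply: measurableI.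
have pn0 : p != 0 by rewrite gt_eqF.
have p1n0 : 1 - p != 0 by rewrite subr_eq0 eq_sym lt_eqF.
have p1pos : 0 < 1 - p by rewrite subr_gt0.
pose q1 := prob P (Dset `&` ~` Aset).
pose q2 := prob P (Dset `&` Aset).
have pc : prob P (~` Dset) = 1 - p.
  rewrite -Ex_indic //. rewrite (@Ex_ext _ _ _ _ _ (fun x => 1 - \1_Dset x)); last first.
 move=> x; rewrite !indicE in_setC. by case: (_ \in _); rewrite /= ?subr0 ?subrr.
  by rewrite ExB ?Ex_cst ?Ex_indic //; [exact: Int_cst | exact: Int_indic].
have pq : p = q1 + q2.
  rewrite /p /q1 /q2 -!Ex_indic // (@Ex_ext _ _ _ _ _
     (fun x => \1_(Dset `&` ~` Aset) x + \1_(Dset `&` Aset) x)); last first.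
    move=> x; rewrite !indicE. rewrite !in_setI in_setC.
    by case: (x \in Dset); case: (x \in Aset); rewrite /= ?addr0 ?add0r.
  by rewrite ExD //; exact: Int_indic.
pose F11 := fun x => g (Y11 x).
pose F10 := fun x => g (Y10 x).
pose F00 := fun x => g (Y00 x).
have I11 : P.-integrable setT (EFin \o F11) by exact: i11.
have I10 : P.-integrable setT (EFin \o F10) by exact: i10.
have I00 : P.-integrable setT (EFin \o F00) by exact: i00.
have J11 : P.-integrable setT (EFin \o (fun x => F11 x * \1_Dset x)) by apply: IntMI.
have J10 : P.-integrable setT (EFin \o (fun x => F10 x * \1_Dset x)) by apply: IntMI.
have J00 : P.-integrable setT (EFin \o (fun x => F00 x * \1_Dset x)) by apply: IntMI.
have K10 : P.-integrable setT (EFin \o (fun x => F10 x * \1_(~` Dset) x)) by apply: IntMI.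
have K00 : P.-integrable setT (EFin \o (fun x => F00 x * \1_(~` Dset) x)) by apply: IntMI.
have L1 : P.-integrable setT (EFin \o (fun x => F00 x * \1_(Dset `&` ~` Aset) x)) by apply: IntMI.
have L2 : P.-integrable setT (EFin \o (fun x => F00 x * \1_(Dset `&` Aset) x)) by apply: IntMI.
pose e1 := Ex P (fun x => F11 x * \1_Dset x).
pose e10 := Ex P (fun x => F10 x * \1_Dset x).
pose e00 := Ex P (fun x => F00 x * \1_Dset x).
pose f10 := Ex P (fun x => F10 x * \1_(~` Dset) x).
pose f00 := Ex P (fun x => F00 x * \1_(~` Dset) x).
pose h1 := Ex P (fun x => F00 x * \1_(Dset `&` ~` Aset) x).
pose h2 := Ex P (fun x => F00 x * \1_(Dset `&` Aset) x).
have hmug : condE P (fun x => g (Y11 x) - g (Y10 x)) Dset = (e1 - e10) / p.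
  rewrite /condE -ExB; try exact: IntMI.
  by congr (_ / _); apply: Ex_ext => x; rewrite mulrBl.
have hiii : (e10 - e00) / p = (f10 - f00) / (1 - p).
  move: iii; rewrite /condE pc /e10 /e00 /f10 /f00 -!ExB; try exact: IntMI.
  by rewrite (@Ex_ext _ _ _ _ (fun x => (g (Y10 x) - g (Y00 x)) * \1_Dset x)
     (fun x => F10 x * \1_Dset x - F00 x * \1_Dset x)) ?(@Ex_ext _ _ _ _
     (fun x => (g (Y10 x) - g (Y00 x)) * \1_(~` Dset) x)
     (fun x => F10 x * \1_(~` Dset) x - F00 x * \1_(~` Dset) x)) //
     => x; rewrite mulrBl.
have Y1D x : x \in Dset -> Y1 x = Y11 x.
  by move=> xD; rewrite /Y1 /Dv indicE xD /= subrr mul0r addr0 mul1r.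
have Y1N x : x \notin Dset -> Y1 x = Y10 x.
  by move=> xD; rewrite /Y1 /Dv indicE (negbTE xD) /= subr0 mul0r add0r mul1r.
have Y0N x : x \notin Dset -> Y0 x = Y00 x.
  by move=> xD; rewrite /Y0 /Dv indicE (negbTE xD) /= subr0 mul0r addr0 mul1r.
have Y0DA x : x \in Dset -> x \notin Aset -> Y0 x = Y00 x.
  move=> xD xA; rewrite /Y0 /Dv /Av !indicE xD (negbTE xA) /=.
  by rewrite subrr subr0 mul0r add0r !mul1r mul0r addr0 Y0001.
have hW (c : R) : Ex P (fun x => (Dv x - p) / (p * (1 - p)) * g (Y1 x)
      + (1 - Dv x) / (1 - p) * g (Y0 x) - c)
    = e1 / p - (f10 / (1 - p) - f00 / (1 - p)) - c.
  rewrite (@Ex_ext _ _ _ _ _ (fun x => (p^-1 * (F11 x * \1_Dset x)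
      - ((1 - p)^-1 * (F10 x * \1_(~` Dset) x)
         - (1 - p)^-1 * (F00 x * \1_(~` Dset) x))) - c)); last first.
    move=> x; have [xD|xD] := boolP (x \in Dset).
      rewrite Y1D // /Dv !indicE in_setC xD /=; exact: alg1.
    rewrite Y1N // Y0N // /Dv !indicE in_setC (negbTE xD) /=; exact: alg2.
  rewrite ExB ?ExB ?ExZ ?Ex_cst //.
  1: congr (_ - _ - _); [by rewrite mulrC | by rewrite !(mulrC (1 - p)^-1)].
  all: repeat first [ assumption | exact: Int_cst | apply: IntB | apply: IntZ ].
have ind_DA' x : \1_(Dset `&` ~` Aset) x = (if (x \in Dset) && (x \notin Aset) then 1 else 0 : R).
  by rewrite indicE in_setI in_setC; case: (_ && _).
have hb : h1 <= b * q1.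
  rewrite /q1 -Ex_indic // -ExZ; last exact: Int_indic.
  apply: Ex_le => //; first by apply: IntZ; apply: Int_indic.
  move=> x; rewrite ind_DA'; case: ifP => [/andP[xD xA]|_]; last by rewrite !mulr0.
  by rewrite !mulr1 /F00 -(Y0DA x xD xA); case/andP: (bnd x).
have ha : a * q1 <= h1.
  rewrite /q1 -Ex_indic // -ExZ; last exact: Int_indic.
  apply: Ex_le => //; first by apply: IntZ; apply: Int_indic.
  move=> x; rewrite ind_DA'; case: ifP => [/andP[xD xA]|_]; last by rewrite !mulr0.
  by rewrite !mulr1 /F00 -(Y0DA x xD xA); case/andP: (bnd x).
have he00 : e00 = h1 + h2.
  rewrite /e00 /h1 /h2 -ExD //; apply: Ex_ext => x.
  rewrite -mulrDr !indicE !in_setI in_setC.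
  by case: (x \in Dset); case: (x \in Aset); rewrite /= ?addr0 ?add0r.
have q2ge0 : 0 <= q2 by rewrite /q2 /prob fine_ge0 // measure_ge0.
pose c := h1 / q1.
have hq1 : q1 != 0 by rewrite gt_eqF.
have hh2 : h2 = c * q2.
  have [q2pos|] := ltP 0 q2.
    have := iv q2pos; rewrite /condE -/q1 -/q2.
    rewrite (@Ex_ext _ _ _ _ (fun x => g (Y00 x) * \1_(Dset `&` ~` Aset) x)
      (fun x => F00 x * \1_(Dset `&` ~` Aset) x)) //.
    rewrite (@Ex_ext _ _ _ _ (fun x => g (Y00 x) * \1_(Dset `&` Aset) x)
      (fun x => F00 x * \1_(Dset `&` Aset) x)) // -/h1 -/h2 -/c => ->.
    by rewrite divfK // gt_eqF.
  move=> q2le; have q20 : q2 = 0 by apply/eqP; rewrite eq_le q2le q2ge0.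
  by rewrite q20 mulr0 /h2 Ex_null.
have he00c : e00 = c * p by rewrite he00 hh2 pq mulrDr /c divfK.
have hcb : c <= b by rewrite /c ler_pdivrMr.
have hca : a <= c by rewrite /c ler_pdivlMr.
rewrite !hW hmug.
have key : e1 / p - (f10 / (1 - p) - f00 / (1 - p)) = (e1 - e10) / p + c.
  rewrite -mulrBl -hiii he00c; exact: alg3.
rewrite key; apply/andP; split; lra.
Qed.
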